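(* If a $T_1$-space $X$ has a strong development at non-isolated points, then $X$ is monotonically normal and paracompact.
   Context: $I(X)$ is the set of isolated points, $\mathcal{I}(X)=\{\{x\}:x\in I(X)\}$, and $\mathrm{st}(A,\mathcal{W})=\bigcup\{W\in\mathcal{W}:W\cap A\neq\emptyset\}$. A sequence $\{\mathcal{W}_i\}_{i\in\mathbb{N}}$ of open covers of $X$ with $\mathcal{I}(X)\subset\bigcup_i\mathcal{W}_i$ is a strong development at non-isolated points if for every $x\in X\setminus I(X)$ and every neighborhood $U$ of $x$ there are a neighborhood $V$ of $x$ and $i\in\mathbb{N}$ with $\mathrm{st}(V,\mathcal{W}_i)\subset U$. $X$ is monotonically normal if to each pair $(p,C)$ with $C$ closed and $p\notin C$ one can assign an open set $H(p,C)$ with (i) $p\in H(p,C)\subset X\setminus C$; (ii) if $D\subset C$ is closed then $H(p,C)\subset H(p,D)$; (iii) if $p\neq q$ then $H(p,\{q\})\cap H(q,\{p\})=\emptyset$. *)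

(* Defs.v *)
From Stdlib Require Import List.

Definition set (X : Type) := X -> Prop.
Definition subset {X : Type} (A B : set X) : Prop := forall x, A x -> B x.
Definition singleton {X : Type} (x : X) : set X := fun y => y = x.
Definition setC {X : Type} (A : set X) : set X := fun x => ~ A x.
Definition meets {X : Type} (A B : set X) : Prop := exists x, A x /\ B x.

Record topology (X : Type) : Type := Topology {
  is_open : set X -> Prop;
  open_full : is_open (fun _ => True);
  open_empty : is_open (fun _ => False);
  open_inter : forall A B, is_open A -> is_open B -> is_open (fun x => A x /\ B x);
  open_union : forall (F : set X -> Prop),
      (forall A, F A -> is_open A) -> is_open (fun x => exists A, F A /\ A x)
}.
Arguments is_open {X} t A.

Definition is_closed {X : Type} (t : topology X) (C : set X) : Prop :=
  is_open t (setC C).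

Definition T1 {X : Type} (t : topology X) : Prop :=
  forall x : X, is_closed t (singleton x).

Definition isolated {X : Type} (t : topology X) (x : X) : Prop :=
  is_open t (singleton x).

Definition open_cover {X : Type} (t : topology X) (W : set X -> Prop) : Prop :=
  (forall A, W A -> is_open t A) /\ (forall x, exists A, W A /\ A x).

Definition star {X : Type} (A : set X) (W : set X -> Prop) : set X :=
  fun z => exists B, W B /\ meets B A /\ B z.

Definition strong_development_nonisolated {X : Type} (t : topology X)
    (W : nat -> (set X -> Prop)) : Prop :=
  (forall i, open_cover t (W i)) /\
  (forall x, isolated t x -> exists i, W i (singleton x)) /\
  (forall x, ~ isolated t x ->
     forall U, is_open t U -> U x ->
       exists V i, is_open t V /\ V x /\ subset (star V (W i)) U).

Definition has_strong_development_nonisolated {X : Type} (t : topology X) : Prop :=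
  exists W, strong_development_nonisolated t W.

Definition monotonically_normal {X : Type} (t : topology X) : Prop :=
  exists H : X -> set X -> set X,
    (forall p C, is_closed t C -> ~ C p ->
       is_open t (H p C) /\ H p C p /\ subset (H p C) (setC C)) /\
    (forall p C D, is_closed t C -> ~ C p -> is_closed t D -> subset D C ->
       subset (H p C) (H p D)) /\
    (forall p q, p <> q ->
       forall z, ~ (H p (singleton q) z /\ H q (singleton p) z)).

Definition locally_finite {X : Type} (t : topology X) (F : set X -> Prop) : Prop :=
  forall x, exists N, is_open t N /\ N x /\
    exists l : list (set X), forall A, F A -> meets A N -> In A l.

Definition paracompact {X : Type} (t : topology X) : Prop :=
  forall U, open_cover t U ->
    exists V, open_cover t V /\ locally_finite t V /\
      (forall B, V B -> exists A, U A /\ subset B A).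

(* Main.v *)
Require Import Defs.
From Stdlib Require Import List Arith Lia Classical PeanoNat Wf_nat FunctionalExtensionality PropExtensionality.
From HB Require Import structures.
From mathcomp Require ssreflect ssrbool eqtype boolp wochoice.

Module WO.
Import ssreflect ssrfun ssrbool eqtype boolp wochoice.
Definition wrap (T : Type) := T.
HB.instance Definition _ (T : Type) := gen_eqMixin (wrap T).
Lemma wo_exists (T : Type) : exists R : T -> T -> Prop, (forall a b, R a b \/ R b a) /\ (forall a b, R a b -> R b a -> a = b) /\ (forall P : T -> Prop, (exists x, P x) -> exists z, P z /\ forall y, P y -> R z y).
Proof.
have [R wo] := well_ordering_principle (wrap T).
have woc : wo_chain R predT by apply: withinW.
exists (fun a b => R a b); split; last split.
- move=> a b; have := wo_chainW woc (x:=a) (y:=b). by case/(_ isT isT)/orP => ->; [left|right].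
- move=> a b ab ba. apply: (wo_chain_antisymmetric woc) => //. by rewrite ab ba.
- move=> P [x Px]. have [|z [[Pz lb] _]] := wo (fun x => `[< P x >]).
    by exists x; rewrite unfold_in; apply/asboolP.
  exists z; split; first by move: Pz; rewrite unfold_in => /asboolP.
  by move=> y Py; apply: lb; rewrite unfold_in; apply/asboolP.
Qed.
End WO.

Lemma set_ext {X : Type} (A B : set X) : (forall x, A x <-> B x) -> A = B.
Proof. intro H. apply functional_extensionality. intro x. apply propositional_extensionality. apply H. Qed.

Lemma open_ext {X : Type} (t : topology X) (A B : set X) :
  (forall x, A x <-> B x) -> is_open t A -> is_open t B.
Proof. intros H HA. rewrite <- (set_ext A B H). exact HA. Qed.

Lemma least_nat (P : nat -> Prop) : (exists n, P n) -> exists n, P n /\ forall m, P m -> n <= m.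
Proof.
  intro H. destruct (dec_inh_nat_subset_has_unique_least_element P (fun n => classic (P n)) H) as [n [[Pn Hn] _]].
  exists n; split; auto.
Qed.

Lemma star_open {X : Type} (t : topology X) (W : set X -> Prop) (A : set X) :
  (forall B, W B -> is_open t B) -> is_open t (star A W).
Proof.
  intro HW. apply (open_ext t (fun z => exists B, (W B /\ meets B A) /\ B z)).
  - intro z; unfold star; split; intros [B HB]; exists B; tauto.
  - apply open_union. intros B [HB _]; auto.
Qed.

Lemma star_incl {X : Type} (W : set X -> Prop) (A : set X) :
  (forall x, exists B, W B /\ B x) -> subset A (star A W).
Proof. intros HW x Ax. destruct (HW x) as [B [WB Bx]]. exists B. split; auto. split; auto. exists x; auto. Qed.

Lemma star_mono {X : Type} (W : set X -> Prop) (A A' : set X) :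
  subset A A' -> subset (star A W) (star A' W).
Proof. intros HA z [B [WB [[y [By Ay]] Bz]]]. exists B. split; auto. split; auto. exists y; auto. Qed.

Lemma star_ref {X : Type} (W W' : set X -> Prop) (A : set X) :
  (forall B, W B -> exists C, W' C /\ subset B C) -> subset (star A W) (star A W').
Proof. intros HR z [B [WB [[y [By Ay]] Bz]]]. destruct (HR B WB) as [C [WC BC]].
  exists C. split; auto. split; auto. exists y; auto. Qed.

Lemma star_sym {X : Type} (W : set X -> Prop) (a b : X) :
  star (singleton a) W b -> star (singleton b) W a.
Proof. intros [B [WB [[y [By Ay]] Bb]]]. unfold singleton in Ay; subst y.
  exists B. split; auto. split; auto. exists b; split; auto. reflexivity. Qed.

Lemma star_step {X : Type} (W : set X -> Prop) (A : set X) (a b : X) :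
  A a -> star (singleton a) W b -> star A W b.
Proof. intros Aa [B [WB [[y [By Ay]] Bb]]]. unfold singleton in Ay; subst y.
  exists B. split; auto. split; auto. exists a; auto. Qed.

Lemma star_chain {X : Type} (W : set X -> Prop) (p q z : X) :
  star (singleton p) W z -> star (singleton q) W z -> star (star (singleton p) W) W q.
Proof. intros H1 H2. apply (star_step W _ z q H1). apply star_sym; auto. Qed.

Lemma star_chain4 {X : Type} (W : set X -> Prop) (x y w z1 z2 : X) :
  star (singleton x) W z1 -> star (singleton w) W z1 ->
  star (singleton w) W z2 -> star (singleton y) W z2 ->
  star (star (star (star (singleton x) W) W) W) W y.
Proof.
  intros H1 H2 H3 H4.
  assert (Hw : star (star (singleton x) W) W w) by (apply (star_chain W x w z1); auto).
  assert (Hz2 : star (star (star (singleton x) W) W) W z2) by (apply (star_step W _ w z2); auto).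
  apply (star_step W _ z2 y); auto. apply star_sym; auto.
Qed.

Fixpoint G {X : Type} (W : nat -> set X -> Prop) (n : nat) : set X -> Prop :=
  match n with
  | 0 => W 0
  | S m => fun B => exists A C, G W m A /\ W (S m) C /\ B = (fun x => A x /\ C x)
  end.

Lemma G_cover {X : Type} (t : topology X) (W : nat -> set X -> Prop) :
  (forall i, open_cover t (W i)) -> forall n, open_cover t (G W n).
Proof.
  intros HW n. induction n as [|n IH]; simpl.
  - apply HW.
  - destruct IH as [IHo IHc]. split.
    + intros B [A [C [GA [WC ->]]]]. apply open_inter; auto. apply (proj1 (HW (S n))); auto.
    + intro x. destruct (IHc x) as [A [GA Ax]]. destruct (proj2 (HW (S n)) x) as [C [WC Cx]].
      exists (fun x => A x /\ C x). split; auto. exists A, C; auto.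
Qed.

Lemma G_W {X : Type} (W : nat -> set X -> Prop) n B : G W n B -> exists C, W n C /\ subset B C.
Proof.
  destruct n as [|m]; simpl; intro H.
  - exists B; split; auto. intros x Hx; auto.
  - destruct H as [A [C [GA [WC ->]]]]. exists C; split; auto. intros x [_ Hx]; auto.
Qed.

Lemma G_ref {X : Type} (W : nat -> set X -> Prop) m n B : m <= n -> G W n B -> exists A, G W m A /\ subset B A.
Proof.
  intro Hle. revert B. induction Hle as [|n Hle IH]; intros B HB.
  - exists B; split; auto. intros x Hx; auto.
  - simpl in HB. destruct HB as [A [C [GA [WC ->]]]]. destruct (IH A GA) as [A' [GA' HA']].
    exists A'; split; auto. intros x [Ax _]; auto.
Qed.

Lemma G_W_le {X : Type} (W : nat -> set X -> Prop) i n B : i <= n -> G W n B -> exists C, W i C /\ subset B C.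
Proof.
  intros Hle HB. destruct (G_ref W i n B Hle HB) as [A [GA BA]]. destruct (G_W W i A GA) as [C [WC AC]].
  exists C; split; auto. intros x Bx; auto.
Qed.

Definition sig {X : Type} (W : nat -> set X -> Prop) n (A : set X) := star A (G W n).

Lemma sig_ref {X : Type} (W : nat -> set X -> Prop) m n A : m <= n -> subset (sig W n A) (sig W m A).
Proof. intro H. apply star_ref. intros B HB. apply (G_ref W m n B H HB). Qed.

Lemma sig_W {X : Type} (W : nat -> set X -> Prop) i n A : i <= n -> subset (sig W n A) (star A (W i)).
Proof. intro H. apply star_ref. intros B HB. apply (G_W_le W i n B H HB). Qed.

Lemma iter_mono {X : Type} (W : nat -> set X -> Prop) k n (A B : set X) :
  subset A B -> subset (Nat.iter k (sig W n) A) (Nat.iter k (sig W n) B).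
Proof. intro H. induction k as [|k IH]; simpl; auto. apply star_mono; auto. Qed.

Lemma strong_iter {X : Type} (t : topology X) (W : nat -> set X -> Prop) :
  strong_development_nonisolated t W ->
  forall k U x, ~ isolated t x -> is_open t U -> U x ->
  exists V N, is_open t V /\ V x /\ forall n, N <= n -> subset (Nat.iter k (sig W n) V) U.
Proof.
  intros [HW [Hi Hs]] k. induction k as [|k IH]; intros U x Hx HU Ux.
  - exists U, 0. split; auto. split; auto. intros n _ z Hz; auto.
  - destruct (Hs x Hx U HU Ux) as [V' [i [HV' [V'x HV'U]]]].
    destruct (IH V' x Hx HV' V'x) as [V [N [HV [Vx HVV']]]].
    exists V, (Nat.max N i). split; auto. split; auto. intros n Hn z Hz. simpl in Hz.
    apply HV'U. apply (sig_W W i n V'). lia.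
    apply (star_mono _ (Nat.iter k (sig W n) V) V'); auto. apply HVV'. lia.
Qed.

Lemma strong_pt {X : Type} (t : topology X) (W : nat -> set X -> Prop) :
  strong_development_nonisolated t W ->
  forall k U x, ~ isolated t x -> is_open t U -> U x ->
  exists N, forall n, N <= n -> subset (Nat.iter k (sig W n) (singleton x)) U.
Proof.
  intros HS k U x Hx HU Ux. destruct (strong_iter t W HS k U x Hx HU Ux) as [V [N [_ [Vx H]]]].
  exists N. intros n Hn z Hz. apply (H n Hn). revert z Hz. apply iter_mono. intros y Hy. unfold singleton in Hy; subst; auto.
Qed.

Lemma sig_open {X : Type} (t : topology X) (W : nat -> set X -> Prop) n A :
  (forall i, open_cover t (W i)) -> is_open t (sig W n A).
Proof. intro HW. apply star_open. apply (proj1 (G_cover t W HW n)). Qed.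

Lemma sig_incl {X : Type} (t : topology X) (W : nat -> set X -> Prop) n A :
  (forall i, open_cover t (W i)) -> subset A (sig W n A).
Proof. intro HW. apply star_incl. apply (proj2 (G_cover t W HW n)). Qed.

Definition Good {X : Type} (W : nat -> set X -> Prop) (p : X) (C : set X) n :=
  forall z, sig W n (sig W n (singleton p)) z -> ~ C z.

Definition Fm {X : Type} (t : topology X) (W : nat -> set X -> Prop) p C (A : set X) :=
  (isolated t p /\ A = singleton p) \/
  (~ isolated t p /\ exists n, Good W p C n /\ (forall m, Good W p C m -> n <= m) /\ A = sig W n (singleton p)).

Definition Hm {X : Type} (t : topology X) (W : nat -> set X -> Prop) p C : set X :=
  fun z => exists A, Fm t W p C A /\ A z.

Lemma good_exists {X : Type} (t : topology X) (W : nat -> set X -> Prop) p C :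
  strong_development_nonisolated t W -> is_closed t C -> ~ C p -> ~ isolated t p ->
  exists n, Good W p C n /\ (forall m, Good W p C m -> n <= m).
Proof.
  intros HS HC Cp Hp. apply least_nat.
  destruct (strong_pt t W HS 2 (setC C) p Hp HC Cp) as [N HN].
  exists N. intros z Hz. apply (HN N (le_n N) z Hz).
Qed.

Lemma mono_normal {X : Type} (t : topology X) (W : nat -> set X -> Prop) :
  strong_development_nonisolated t W -> monotonically_normal t.
Proof.
  intro HS. pose proof (proj1 HS) as HW.
  exists (Hm t W). split; [|split].
  - intros p C HC Cp. split; [|split].
    + apply open_union. intros A [[Hp ->]|[Hp [n [_ [_ ->]]]]]; auto. apply sig_open; auto.
    + destruct (classic (isolated t p)) as [Hp|Hp].
      * exists (singleton p). split. left; auto. reflexivity.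
      * destruct (good_exists t W p C HS HC Cp Hp) as [n [Gn Ln]].
        exists (sig W n (singleton p)). split. right. split; auto. exists n; auto.
        apply (sig_incl t W n); auto. reflexivity.
    + intros z [A [[[Hp ->]|[Hp [n [Gn [_ ->]]]]] Az]].
      * unfold singleton in Az; subst; auto.
      * apply Gn. apply (sig_incl t W n); auto.
  - intros p C D HC Cp HD DC z [A [[[Hp ->]|[Hp [n [Gn [Ln ->]]]]] Az]].
    + exists (singleton p). split; auto. left; auto.
    + assert (Dp : ~ D p) by auto.
      destruct (good_exists t W p D HS HD Dp Hp) as [n' [Gn' Ln']].
      exists (sig W n' (singleton p)). split. right. split; auto. exists n'; auto.
      apply (sig_ref W n' n). apply Ln'. intros y Hy Dy. apply (Gn y Hy). auto. auto.
  - intros p q Hpq z [[A [FA Az]] [B [FB Bz]]].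
    destruct FA as [[Hp ->]|[Hp [n [Gn [Ln ->]]]]];
    destruct FB as [[Hq ->]|[Hq [m [Gm [Lm ->]]]]]; unfold singleton in *.
    + congruence.
    + subst z. apply (Gm p). apply (sig_incl t W m); auto. reflexivity.
    + subst z. apply (Gn q). apply (sig_incl t W n); auto. reflexivity.
    + destruct (le_ge_dec n m) as [Hnm|Hnm].
      * apply (Gn q). apply (star_chain _ p q z); auto. apply (sig_ref W n m); auto. reflexivity.
      * apply (Gm p). apply (star_chain _ q p z); auto. apply (sig_ref W m n); auto. reflexivity.
Qed.


Definition leastc {X : Type} (R : set X -> set X -> Prop) (U : set X -> Prop) s (x : X) :=
  U s /\ s x /\ forall s', U s' -> s' x -> R s s'.

Definition Ec {X : Type} (W : nat -> set X -> Prop) R U (b : set X) n s x :=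
  leastc R U s x /\ ~ b x /\ subset (Nat.iter 4 (sig W n) (singleton x)) s.

Definition Lev {X : Type} (W : nat -> set X -> Prop) R U (b : set X) n s : set X :=
  fun z => exists x, Ec W R U b n s x /\ sig W n (singleton x) z.

Fixpoint before {X : Type} (W : nat -> set X -> Prop) R U n : set X :=
  match n with
  | 0 => fun _ => False
  | S m => fun z => before W R U m z \/ exists s, Lev W R U (before W R U m) m s z
  end.

Definition Vs {X : Type} (W : nat -> set X -> Prop) R U n s := Lev W R U (before W R U n) n s.

Lemma before_iff {X : Type} (W : nat -> set X -> Prop) R U n z :
  before W R U n z <-> exists j s, j < n /\ Vs W R U j s z.
Proof.
  induction n as [|n IH]; simpl.
  - split. tauto. intros [j [s [H _]]]; lia.
  - rewrite IH. split.
    + intros [[j [s [Hj H]]]|[s H]]. exists j, s; split; auto; lia. exists n, s; split; auto.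
    + intros [j [s [Hj H]]]. destruct (Nat.eq_dec j n) as [->|Hne].
      * right; exists s; auto.
      * left; exists j, s; split; auto; lia.
Qed.

Lemma V_open {X : Type} (t : topology X) (W : nat -> set X -> Prop) R U n s :
  (forall i, open_cover t (W i)) -> is_open t (Vs W R U n s).
Proof.
  intro HW. apply (open_ext t (fun z => exists A, (exists x, Ec W R U (before W R U n) n s x /\ A = sig W n (singleton x)) /\ A z)).
  - intro z; split.
    + intros [A [[x [Ex ->]] Az]]. exists x; auto.
    + intros [x [Ex Hz]]. exists (sig W n (singleton x)). split; auto. exists x; auto.
  - apply open_union. intros A [x [_ ->]]. apply sig_open; auto.
Qed.

Lemma iter4_incl {X : Type} (t : topology X) (W : nat -> set X -> Prop) n x :
  (forall i, open_cover t (W i)) -> subset (sig W n (singleton x)) (Nat.iter 4 (sig W n) (singleton x)).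
Proof.
  intros HW z Hz. simpl. repeat (apply (sig_incl t W n); auto).
Qed.

Lemma V_sub {X : Type} (t : topology X) (W : nat -> set X -> Prop) R U n s :
  (forall i, open_cover t (W i)) -> subset (Vs W R U n s) s.
Proof.
  intros HW z [x [[_ [_ H4]] Hz]]. apply H4. apply (iter4_incl t W n x HW z Hz).
Qed.

Lemma V_U {X : Type} (W : nat -> set X -> Prop) R U n s z : Vs W R U n s z -> U s.
Proof. intros [x [[[Us _] _] _]]; auto. Qed.

Lemma V_cover {X : Type} (t : topology X) (W : nat -> set X -> Prop) R U :
  strong_development_nonisolated t W -> open_cover t U ->
  (forall P : set X -> Prop, (exists x, P x) -> exists z, P z /\ forall y, P y -> R z y) ->
  forall x, ~ isolated t x -> exists n s, Vs W R U n s x.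
Proof.
  intros HS [HUo HUc] HR x Hx.
  destruct (HR (fun s => U s /\ s x)) as [s [[Us sx] Ls]].
  { destruct (HUc x) as [A [UA Ax]]. exists A; auto. }
  destruct (strong_pt t W HS 4 s x Hx (HUo s Us) sx) as [N HN].
  destruct (classic (before W R U N x)) as [Hb|Hb].
  - apply before_iff in Hb. destruct Hb as [j [s' [_ H]]]. exists j, s'; auto.
  - exists N, s. exists x. split.
    + split; [|split].
      * split; [exact Us|split; [exact sx|]]. intros s' Us' s'x. apply Ls. split; assumption.
      * exact Hb.
      * apply HN. apply le_n.
    + apply (sig_incl t W N (singleton x) (proj1 HS)). reflexivity.
Qed.

Lemma V_sep {X : Type} (W : nat -> set X -> Prop) R U n s s' (w : X) :
  (forall a b, R a b -> R b a -> a = b) ->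
  meets (Vs W R U n s) (sig W n (singleton w)) -> meets (Vs W R U n s') (sig W n (singleton w)) -> s = s'.
Proof.
  intros Hanti [z1 [[x [[[Us [sx Ls]] [_ Hx4]] Hz1x]] Hz1w]] [z2 [[y [[[Us' [s'y Ls']] [_ Hy4]] Hz2y]] Hz2w]].
  apply Hanti.
  - apply Ls; [exact Us'|]. apply Hy4. simpl. apply (star_chain4 _ y x w z2 z1); auto.
  - apply Ls'; [exact Us|]. apply Hx4. simpl. apply (star_chain4 _ x y w z1 z2); auto.
Qed.

Definition Raw {X : Type} (W : nat -> set X -> Prop) R U (A : set X) :=
  exists n s, U s /\ A = Vs W R U n s.

Lemma locfin_nonisol {X : Type} (t : topology X) (W : nat -> set X -> Prop) R U :
  strong_development_nonisolated t W -> open_cover t U ->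
  (forall P : set X -> Prop, (exists x, P x) -> exists z, P z /\ forall y, P y -> R z y) ->
  (forall a b, R a b -> R b a -> a = b) ->
  forall w, ~ isolated t w ->
  exists N, is_open t N /\ N w /\ exists l : list (set X), forall A, Raw W R U A -> meets A N -> In A l.
Proof.
  intros HS HU HR Hanti w Hw. pose proof (proj1 HS) as HW.
  destruct (V_cover t W R U HS HU HR w Hw) as [j [s Hjs]].
  destruct (strong_pt t W HS 2 (Vs W R U j s) w Hw (V_open t W R U j s HW) Hjs) as [N HN].
  set (K := Nat.max N (S j)).
  set (M := sig W K (singleton w)).
  assert (Hfar : forall n s', K <= n -> ~ meets (Vs W R U n s') M).
  { intros n s' Hn [z [[y [[_ [Hb _]] Hzy]] HzM]]. apply Hb. apply before_iff.
    exists j, s. split. lia. apply (HN K). lia. simpl.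
    apply (star_chain _ w y z); auto. apply (sig_ref W K n _ Hn); auto. }
  assert (Hlist : forall k, exists l : list (set X), forall n s', n < k -> U s' -> meets (Vs W R U n s') M -> In (Vs W R U n s') l).
  { induction k as [|k IH].
    - exists nil. intros; lia.
    - destruct IH as [l Hl]. destruct (classic (exists s0, U s0 /\ meets (Vs W R U k s0) M)) as [[s0 [Us0 Hs0]]|Hno].
      + exists (Vs W R U k s0 :: l). intros n s' Hn Us' Hm.
        destruct (Nat.eq_dec n k) as [->|Hne].
        * left. assert (E : s0 = s').
          { destruct (le_lt_dec K k) as [HK|HK]. exfalso; apply (Hfar k s0 HK Hs0).
            apply (V_sep W R U k s0 s' w Hanti).
            destruct Hs0 as [z [Hz1 Hz2]]. exists z. split; auto. apply (sig_ref W k K); auto. lia.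
            destruct Hm as [z [Hz1 Hz2]]. exists z. split; auto. apply (sig_ref W k K); auto. lia. }
          rewrite E; auto.
        * right. apply Hl; auto. lia.
      + exists l. intros n s' Hn Us' Hm. destruct (Nat.eq_dec n k) as [->|Hne].
        * exfalso. apply Hno. exists s'; auto.
        * apply Hl; auto. lia. }
  destruct (Hlist K) as [l Hl].
  exists M. split. apply sig_open; auto. split. apply (sig_incl t W K); auto. reflexivity.
  exists l. intros A [n [s' [Us' ->]]] Hm. apply Hl; auto.
  destruct (le_lt_dec K n) as [HK|HK]; auto. exfalso; apply (Hfar n s' HK Hm).
Qed.

Lemma paracomp {X : Type} (t : topology X) (W : nat -> set X -> Prop) :
  T1 t -> strong_development_nonisolated t W -> paracompact t.
Proof.
  intros HT1 HS U HU. pose proof (proj1 HS) as HW.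
  destruct (WO.wo_exists (set X)) as [R [_ [Hanti HR]]].
  set (Lf := fun N : set X => is_open t N /\ exists l : list (set X), forall A, Raw W R U A -> meets A N -> In A l).
  set (O := fun z : X => exists N, Lf N /\ N z).
  assert (HO : is_open t O) by (apply open_union; intros N [HN _]; exact HN).
  set (Cov := fun z : X => exists B, Raw W R U B /\ B z /\ O z).
  set (Fam := fun A : set X => (exists B, Raw W R U B /\ A = (fun z => B z /\ O z)) \/
                               (exists w, isolated t w /\ ~ Cov w /\ A = singleton w)).
  assert (Hnon : forall z, ~ isolated t z -> Cov z).
  { intros z Hz. destruct (V_cover t W R U HS HU HR z Hz) as [n [s Hns]].
    exists (Vs W R U n s). split. exists n, s. split; auto. apply (V_U W R U n s z Hns).
    split; auto. destruct (locfin_nonisol t W R U HS HU HR Hanti z Hz) as [N [HN [Nz Hl]]].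
    exists N. split; auto. split; auto. }
  exists Fam. split; [split|split].
  - intros A [[B [[n [s [Us ->]]] ->]]|[w [Hw [_ ->]]]].
    + apply open_inter; auto. apply V_open; auto.
    + exact Hw.
  - intro z. destruct (classic (Cov z)) as [Hc|Hc].
    + destruct Hc as [B [RB [Bz Oz]]]. exists (fun z => B z /\ O z). split; auto. left. exists B; auto.
    + assert (Hi : isolated t z) by (apply NNPP; intro Hi; apply Hc; apply Hnon; auto).
      exists (singleton z). split. right. exists z; auto. reflexivity.
  - intro z. destruct (classic (Cov z)) as [Hc|Hc].
    + destruct Hc as [B0 [RB0 [B0z [N [[HN [l Hl]] Nz]]]]].
      assert (HB0 : is_open t B0) by (destruct RB0 as [n [s [_ ->]]]; apply V_open; auto).
      exists (fun y => N y /\ (fun y => B0 y /\ O y) y). split. apply open_inter; auto. apply open_inter; auto.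
      split. split; auto. split; auto. exists N; split; auto. split; auto. exists l; auto.
      exists (map (fun B => fun y => B y /\ O y) l).
      intros A [[B [RB ->]]|[w [Hw [Hcw ->]]]] [y [Ay Hy]].
      * apply (in_map (fun B : set X => fun y => B y /\ O y) l B). apply Hl; auto. exists y. split. apply Ay. apply Hy.
      * exfalso. apply Hcw. unfold singleton in Ay. subst y. destruct Hy as [_ [B0w Ow]]. exists B0; auto.
    + assert (Hi : isolated t z) by (apply NNPP; intro Hi; apply Hc; apply Hnon; auto).
      exists (singleton z). split; auto. split. reflexivity.
      exists (singleton z :: nil). intros A [[B [RB ->]]|[w [Hw [Hcw ->]]]] [y [Ay Hy]].
      * exfalso. apply Hc. unfold singleton in Hy. subst y. exists B. tauto.
      * left. unfold singleton in Ay, Hy. subst. reflexivity.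
  - intros A [[B [[n [s [Us ->]]] ->]]|[w [Hw [_ ->]]]].
    + exists s. split; auto. intros x [Hx _]. apply (V_sub t W R U n s HW); auto.
    + destruct (proj2 HU w) as [C [UC Cw]]. exists C. split; auto. intros x Hx. unfold singleton in Hx; subst; auto.
Qed.

Theorem mainTheorem4 (X : Type) (t : topology X) :
  T1 t -> has_strong_development_nonisolated t ->
  monotonically_normal t /\ paracompact t.
Proof.
  intros HT1 [W HS]. split. apply (mono_normal t W HS). apply (paracomp t W HT1 HS).
Qed.
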